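(* Let $\delta \ge 0$. For each integer $n \ge 1$ let $\rho_n > 0$ be the positive solution of the equation $$\int_{1/n}^\infty e^{-\rho_n x}\,Q(dx) = \bar{Q}(1/n) + \delta - \frac{\sigma^2}{2}\rho_n^2 + \mu\rho_n,$$ equivalently of $\delta - \frac{\sigma^2}{2}\rho_n^2 + \mu\rho_n + \int_{1/n}^\infty (1-e^{-\rho_n x})\,Q(dx) = 0$. Then $\rho_n$ converges, as $n \to \infty$, to the unique solution $\rho > 0$ of the generalized Lundberg equation $\delta = \varphi_D(\rho)$.
   Context: Let $\{B_t\}_{t\ge 0}$ be a standard Brownian motion and $\{G_t\}_{t\ge0}$ an independent subordinator (non-decreasing Lévy process) with drift $\mu \ge 0$ and Lévy measure $Q(dx) = q(x)\,dx$ on $(0,\infty)$, where $\int_0^\infty (1\wedge x)\,Q(dx) < \infty$. Let $\sigma > 0$ and $D_t = G_t + \sigma B_t$. Its Laplace exponent is $$\varphi_D(u) = -\mu u + \int_0^\infty (e^{-ux}-1)\,Q(dx) + \tfrac12 u^2\sigma^2,$$ so that $\mathbb{E}[e^{-uD_t}] = e^{t\varphi_D(u)}$ for $u \ge 0$. Write $\bar{Q}(x) = Q([x,\infty))$ for $x > 0$. *)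

(* Defs.v *)
From mathcomp Require Import all_boot all_order all_algebra.
From mathcomp Require Import all_classical all_reals all_analysis.
Set Implicit Arguments. Unset Strict Implicit. Unset Printing Implicit Defensive.
Import Order.TTheory GRing.Theory Num.Theory.
Local Open Scope classical_set_scope.
Local Open Scope ring_scope.

(* q is the density of the Levy measure Q(dx) = q(x) dx on (0,oo):
   nonnegative, measurable on (0,oo), and int_0^oo (1 /\ x) Q(dx) < oo. *)
Definition levy_density {R : realType} (q : R -> R) : Prop :=
  [/\ (forall x : R, 0 < x -> 0 <= q x),
      measurable_fun `](0:R), +oo[ q &
      (@lebesgue_measure R).-integrable `](0:R), +oo[
        (fun x => (Num.min 1 x * q x)%:E)].

Definition Qbar {R : realType} (q : R -> R) (x : R) : R :=
  Rintegral (@lebesgue_measure R) `[x, +oo[ q.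

(* Laplace exponent of D_t = G_t + sigma B_t:
   phi_D(u) = - mu u + int_0^oo (e^{-ux} - 1) Q(dx) + u^2 sigma^2 / 2 *)
Definition phiD {R : realType} (mu sigma : R) (q : R -> R) (u : R) : R :=
  - (mu * u)
  + Rintegral (@lebesgue_measure R) `](0:R), +oo[
      (fun x => (expR (- (u * x)) - 1) * q x)
  + u ^+ 2 * sigma ^+ 2 / 2.

Definition trunc_laplace {R : realType} (q : R -> R) (a r : R) : R :=
  Rintegral (@lebesgue_measure R) `[a, +oo[ (fun x => expR (- (r * x)) * q x).

(* Main.v *)
Require Import Defs.
From mathcomp Require Import all_boot all_order all_algebra.
From mathcomp Require Import all_classical all_reals all_analysis.
From mathcomp Require Import lra ring.
From mathcomp Require Import measurable_realfun.
Import Order.TTheory GRing.Theory Num.Theory numFieldNormedType.Exports.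
Local Open Scope classical_set_scope.
Local Open Scope ring_scope.
Set Implicit Arguments. Unset Strict Implicit.

Lemma exp_chord (R : realType) (s t : R) : 0 <= s -> s <= t ->
  s * (1 - expR (- t)) <= t * (1 - expR (- s)).
Proof.
move=> s0 st.
have [t0|t0] := eqVneq t 0.
  rewrite t0 in st *; have -> : s = 0 by apply/le_anti; rewrite s0 st.
  by rewrite !mul0r.
have tpos : 0 < t by rewrite lt_neqAle eq_sym t0 (le_trans s0 st).
have h0 : 0 <= s / t by rewrite divr_ge0 // ltW.
have h1 : s / t <= 1 by rewrite ler_pdivrMr // mul1r.
have := @convex_expR R (Itv01 h0 h1) (- t) 0.
rewrite !convRE /= expR0 mulr0 addr0.
have -> : s / t * - t = - s by rewrite mulrN divfK.
rewrite /unstable.onem mulr1 => H.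
have : t * expR (- s) <= t * (s / t * expR (- t) + (1 - s / t)).
  by rewrite ler_pM2l.
rewrite mulrDr mulrA (mulrC t (s / t)) divfK // mulrBr mulr1 (mulrC t (s/t)) divfK //.
lra.
Qed.

Lemma int_dom (R : realType) (q : R -> R) (A : set R) (F : R -> R) (C : R) :
  levy_density q -> measurable A -> A `<=` `](0:R), +oo[ ->
  measurable_fun setT F ->
  (forall x, A x -> `|F x| <= C * Num.min 1 x) ->
  (@lebesgue_measure R).-integrable A (EFin \o (fun x => F x * q x)).
Proof.
case=> q0 mq iq mA AD mF FC.
have mD : measurable (`](0:R), +oo[ : set R) by [].
apply: (@le_integrable _ _ _ (@lebesgue_measure R) A _ _ (fun x => (C%:E * (Num.min 1 x * q x)%:E)%E)).
- exact: mA.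
- apply/measurable_realfun.measurable_EFinP; apply: measurable_realfun.measurable_funM.
    exact: measurable_funS mF.
  exact: measurable_funS mq.
- move=> x Ax /=; rewrite lee_fin.
  have xp : 0 < x by have := AD _ Ax; rewrite /= in_itv /= andbT.
  have qx := q0 _ xp.
  rewrite normrM (ger0_norm qx).
  apply: le_trans (ler_norm _).
  by rewrite mulrA; apply: ler_wpM2r => //; exact: FC.
- apply: (@integrableS _ _ _ (@lebesgue_measure R) `](0:R), +oo[ A); [exact: mD|exact: mA|exact: AD|].
  apply: (integrableZl _ C iq); exact: mD.
Qed.
Lemma bound1 (R : realType) (u x : R) : 0 <= u -> 0 < x ->
  `|1 - expR (- (u * x))| <= (1 + u) * Num.min 1 x.
Proof.
move=> u0 x0.
have e1 : expR (- (u * x)) <= 1.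
  by rewrite -expR0 ler_expR oppr_le0 mulr_ge0 // ltW.
have e2 := expR_ge1Dx (- (u * x)).
have e3 := expR_gt0 (- (u * x)).
rewrite ger0_norm ?subr_ge0 //.
rewrite /Num.min; case: ifP => x1.
- nra.
- have x2 : x <= 1 by rewrite leNgt x1.
  nra.
Qed.

Lemma mexp (R : realType) (u : R) :
  measurable_fun setT (fun x : R => 1 - expR (- (u * x))).
Proof.
apply: measurable_realfun.measurable_funB => //.
apply: measurableT_comp; first exact: measurable_realfun.measurable_expR.
apply: measurable_realfun.measurable_funN.
exact: measurable_realfun.mulrl_measurable.
Qed.

Lemma mexp2 (R : realType) (u : R) :
  measurable_fun setT (fun x : R => expR (- (u * x))).
Proof.
apply: measurableT_comp; first exact: measurable_realfun.measurable_expR.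
apply: measurable_realfun.measurable_funN.
exact: measurable_realfun.mulrl_measurable.
Qed.

Definition Gq (R : realType) (q : R -> R) (A : set R) (u : R) : R :=
  Rintegral (@lebesgue_measure R) A (fun x => (1 - expR (- (u * x))) * q x).

Lemma pos_of (R : realType) (A : set R) x :
  A `<=` `](0:R), +oo[ -> A x -> 0 < x.
Proof. by move=> AD Ax; have := AD _ Ax; rewrite /= in_itv /= andbT. Qed.

Lemma G_int (R : realType) (q : R -> R) (A : set R) (u : R) :
  levy_density q -> measurable A -> A `<=` `](0:R), +oo[ -> 0 <= u ->
  (@lebesgue_measure R).-integrable A
    (EFin \o (fun x => (1 - expR (- (u * x))) * q x)).
Proof.
move=> lq mA AD u0.
apply: (@int_dom R q A (fun x => 1 - expR (- (u * x))) (1 + u) lq mA AD (mexp u)) => x Ax.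

by apply: bound1 => //; exact: pos_of Ax.
Qed.

Lemma G_intM (R : realType) (q : R -> R) (A : set R) (u c : R) :
  levy_density q -> measurable A -> A `<=` `](0:R), +oo[ -> 0 <= u ->
  (@lebesgue_measure R).-integrable A
    (EFin \o (fun x => c * ((1 - expR (- (u * x))) * q x))).
Proof.
move=> lq mA AD u0.
apply: (@eq_integrable _ _ _ (@lebesgue_measure R) A _ (EFin \o (fun x => (c * (1 - expR (- (u * x)))) * q x))).
- exact: mA.
- by move=> x _ /=; rewrite mulrA.
apply: (@int_dom R q A (fun x => c * (1 - expR (- (u * x)))) (`|c| * (1 + u)) lq mA AD).
  by apply: measurable_realfun.measurable_funM => //; exact: mexp.
move=> x Ax; rewrite normrM -mulrA ler_wpM2l //.
by apply: bound1 => //; exact: pos_of Ax.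
Qed.

Lemma G_ge0 (R : realType) (q : R -> R) (A : set R) (u : R) :
  levy_density q -> A `<=` `](0:R), +oo[ -> 0 <= u -> 0 <= Gq q A u.
Proof.
case=> q0 _ _ AD u0; apply: Rintegral_ge0 => x Ax.
have xp := pos_of AD Ax.
apply: mulr_ge0; last exact: q0.
by rewrite subr_ge0 -expR0 ler_expR oppr_le0 mulr_ge0 // ltW.
Qed.

Lemma G_scale (R : realType) (q : R -> R) (A : set R) (a b : R) :
  levy_density q -> measurable A -> A `<=` `](0:R), +oo[ -> 0 < a -> a <= b ->
  a * Gq q A b <= b * Gq q A a.
Proof.
move=> lq mA AD a0 ab.
have b0 : 0 < b := lt_le_trans a0 ab.
rewrite /Gq -RintegralZl; last first.
- exact: G_int (ltW b0).
- exact: mA.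
rewrite -RintegralZl; last first.
- exact: G_int (ltW a0).
- exact: mA.
apply: le_Rintegral.
- exact: mA.
- exact: G_intM (ltW b0).
- exact: G_intM (ltW a0).
move=> x Ax; have xp := pos_of AD Ax.
have qx : 0 <= q x by case: lq => q0 _ _; exact: q0.
have H := @exp_chord R (a * x) (b * x) (mulr_ge0 (ltW a0) (ltW xp))
  (ler_wpM2r (ltW xp) ab).
have H2 : a * (1 - expR (- (b * x))) <= b * (1 - expR (- (a * x))).
  rewrite -(ler_pM2r xp).
  by rewrite mulrAC [X in _ <= X]mulrAC.
by rewrite !mulrA; apply: ler_wpM2r.
Qed.

Lemma G_sub (R : realType) (q : R -> R) (A B : set R) (u : R) :
  levy_density q -> measurable A -> measurable B -> A `<=` B ->
  B `<=` `](0:R), +oo[ -> 0 <= u -> Gq q A u <= Gq q B u.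
Proof.
move=> lq mA mB AB BD u0.
have AD : A `<=` `](0:R), +oo[ by move=> x /AB /BD.
rewrite /Gq /Rintegral; apply: fine_le.
- by apply: integrable_fin_num; [exact: mA|exact: G_int].
- by apply: integrable_fin_num; [exact: mB|exact: G_int].
apply: ge0_subset_integral; last exact: AB.
- exact: mA.
- exact: mB.
- by apply: measurable_int; exact: G_int.
move=> x Bx; rewrite lee_fin.
have xp := pos_of BD Bx.
apply: mulr_ge0; last by case: lq => q0 _ _; exact: q0.
by rewrite subr_ge0 -expR0 ler_expR oppr_le0 mulr_ge0 // ltW.
Qed.

Lemma G_mono (R : realType) (q : R -> R) (A : set R) (u v : R) :
  levy_density q -> measurable A -> A `<=` `](0:R), +oo[ -> 0 <= u -> u <= v ->
  Gq q A u <= Gq q A v.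
Proof.
move=> lq mA AD u0 uv.
apply: le_Rintegral.
- exact: mA.
- exact: G_int.
- exact: G_int (le_trans u0 uv).
move=> x Ax; have xp := pos_of AD Ax.
have qx : 0 <= q x by case: lq => q0 _ _; exact: q0.
apply: ler_wpM2r => //.
by rewrite lerB // ler_expR lerN2 ler_wpM2r // ltW.
Qed.

Lemma one_le_min (R : realType) (a x : R) : 0 < a -> a <= x ->
  1 <= (1 + a^-1) * Num.min 1 x.
Proof.
move=> a0 ax.
have ia : 0 < a^-1 by rewrite invr_gt0.
have x0 : 0 < x := lt_le_trans a0 ax.
have h : 1 <= x * a^-1 by rewrite ler_pdivlMr // mul1r.
rewrite /Num.min; case: ifP => x1; nra.
Qed.

Lemma hyp_conv (R : realType) (q : R -> R) (a r : R) :
  levy_density q -> 0 < a -> 0 <= r ->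
  Gq q `[a, +oo[ r = Qbar q a - trunc_laplace q a r.
Proof.
move=> lq a0 r0.
have mA : measurable (`[a, +oo[ : set R) by exact: measurable_itv.
have AD : `[a, +oo[ `<=` `](0:R), +oo[.
  move=> x; rewrite /= !in_itv /= !andbT => ax.
  exact: lt_le_trans ax.
rewrite /Gq /Qbar /trunc_laplace -RintegralB.
- by apply: eq_Rintegral => x _; rewrite mulrBl mul1r.
- exact: mA.
- apply: (@eq_integrable _ _ _ (@lebesgue_measure R) _ _ (EFin \o (fun x => 1 * q x))).
  + exact: mA.
  + by move=> x _ /=; rewrite mul1r.
  apply: (@int_dom R q _ (fun x => 1) (1 + a^-1) lq mA AD) => //.
  move=> x; rewrite /= in_itv /= andbT => ax.
  by rewrite normr1; exact: one_le_min.
- apply: (@int_dom R q _ (fun x => expR (- (r * x))) (1 + a^-1) lq mA AD).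
    exact: mexp2.
  move=> x; rewrite /= in_itv /= andbT => ax.
  have x0 : 0 < x := lt_le_trans a0 ax.
  rewrite ger0_norm ?expR_ge0 //; apply: le_trans (one_le_min a0 ax).
  by rewrite -expR0 ler_expR oppr_le0 mulr_ge0 // ltW.
Qed.

Lemma phi_conv (R : realType) (mu sigma : R) (q : R -> R) (u : R) :
  levy_density q -> 0 <= u ->
  phiD mu sigma q u = - (mu * u) - Gq q `](0:R), +oo[ u + u ^+ 2 * sigma ^+ 2 / 2.
Proof.
move=> lq u0.
have mD : measurable (`](0:R), +oo[ : set R) by [].
rewrite /phiD /Gq; congr (_ + _); congr (_ + _).
have -> : Rintegral (@lebesgue_measure R) `](0:R), +oo[
      (fun x => (expR (- (u * x)) - 1) * q x) =
    Rintegral (@lebesgue_measure R) `](0:R), +oo[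
      (fun x => -1 * ((1 - expR (- (u * x))) * q x)).
  by apply: eq_Rintegral => x _; rewrite mulrA mulN1r opprB.
rewrite RintegralZl.
- by rewrite mulN1r.
- exact: mD.
- have H := G_int lq mD (fun x h => h) u0; exact H.
Qed.

Lemma cvg_poly (R : realType) (s : nat -> R) (L a b c : R) :
  s @ \oo --> L ->
  (fun n => a * (s n * s n) + b * s n + c) @ \oo --> a * (L * L) + b * L + c.
Proof.
move=> sL.
apply: cvgD; last exact: cvg_cst.
apply: cvgD; apply: cvgM; try exact: cvg_cst; try exact: sL.
exact: cvgM.
Qed.

Lemma G_lim (R : realType) (q : R -> R) (u c : R) :
  levy_density q -> 0 <= u ->
  (forall m : nat, Gq q `[(m.+1)%:R^-1, +oo[ u <= c) ->
  Gq q `](0:R), +oo[ u <= c.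
Proof.
move=> lq u0 Hm.
have q0 : forall x : R, 0 < x -> 0 <= q x by case: lq.
pose f := fun x : R => (1 - expR (- (u * x))) * q x.
pose D0 : set R := `](0:R), +oo[%classic.
have mD : measurable D0 by exact: measurable_itv.
pose Dm (m : nat) : set R := `[(m.+1)%:R^-1, +oo[%classic.
have mDm m : measurable (Dm m) by exact: measurable_itv.
have DmD m : Dm m `<=` D0.
  move=> x; rewrite /Dm /D0 /= !in_itv /= !andbT; apply: lt_le_trans.
  by rewrite invr_gt0 ltr0n.
have iD : (@lebesgue_measure R).-integrable D0 (EFin \o f).
  have H := G_int lq mD (fun x h => h) u0; exact H.
have iDm m : (@lebesgue_measure R).-integrable (Dm m) (EFin \o f).
  have H := G_int lq (mDm m) (DmD m) u0; exact H.
have fge0 x : D0 x -> 0 <= f x.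
  move=> Dx; have xp : 0 < x by move: Dx; rewrite /D0 /= in_itv /= andbT.
  apply: mulr_ge0; last exact: q0.
  by rewrite subr_ge0 -expR0 ler_expR oppr_le0 mulr_ge0 // ltW.
pose f_ m : R -> \bar R := (EFin \o f) \_ (Dm m).
have key : (fun m => \int[@lebesgue_measure R]_(x in D0) f_ m x)%E @ \oo -->
    (\int[@lebesgue_measure R]_(x in D0) (EFin \o f) x)%E.
  have mf_ : forall n, measurable_fun D0 (f_ n).
    move=> n; apply: (measurable_funS _ (@subsetT _ D0)) => //.
    apply/(measurable_restrictT _ _).1; first exact: mDm.
    exact: (measurable_int _ (iDm n)).
  have mf : measurable_fun D0 (EFin \o f) by exact: (measurable_int _ iD).
  have fcv : {ae @lebesgue_measure R, forall x, D0 x -> f_ ^~ x @ \oo --> (EFin \o f) x}.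
    apply: aeW => x Dx.
    have xp : 0 < x by move: Dx; rewrite /D0 /= in_itv /= andbT.
    have [N HN] : exists N : nat, x^-1 < N%:R.
      by exists (Num.Def.archi_bound x^-1); apply: archi_boundP; rewrite invr_ge0 ltW.
    apply: cvg_near_cst; exists N => // n /= Nn.
    rewrite /f_ patchT // inE /Dm /= in_itv /= andbT.
    rewrite invf_ple ?posrE ?ltr0n // ?invr_gt0 ?ltr0n //.
    apply: (le_trans (ltW HN)); rewrite ler_nat; exact: leqW.

  have fg : {ae @lebesgue_measure R, forall x n, D0 x -> (`|f_ n x| <= (EFin \o f) x)%E}.
    apply: aeW => y k Dy.
    rewrite /f_ /patch; case: ifP => _.
      by rewrite /= lee_fin ger0_norm //; exact: fge0.
    by rewrite abse0 lee_fin; exact: fge0.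
  have [_ _ H] := @dominated_convergence _ _ _ (@lebesgue_measure R) D0 mD
    f_ (EFin \o f) (EFin \o f) mf_ mf fcv iD fg.
  exact: H.
have eqm m : (Gq q (Dm m) u)%:E = (\int[@lebesgue_measure R]_(x in D0) f_ m x)%E.
  rewrite /f_ -integral_mkcondr setIidr; last exact: DmD.
  rewrite /Gq /Rintegral fineK //.
  by apply: integrable_fin_num; [exact: mDm|exact: iDm].
rewrite -lee_fin /Gq /Rintegral fineK; last first.
  by apply: integrable_fin_num; [exact: mD|exact: iD].
rewrite -(cvg_lim _ key) //.
apply: lime_le; first exact: cvgP key.
by apply: nearW => m; rewrite -eqm lee_fin; exact: Hm.
Qed.

Lemma compare (R : realType) (q : R -> R) (A B : set R) (mu sigma delta a b : R) :
  levy_density q -> measurable A -> measurable B -> A `<=` B ->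
  B `<=` `](0:R), +oo[ -> 0 < sigma -> 0 <= delta -> 0 < a -> 0 < b ->
  sigma ^+ 2 / 2 * (a * a) + - mu * a + - delta <= Gq q A a ->
  Gq q B b <= sigma ^+ 2 / 2 * (b * b) + - mu * b + - delta -> a <= b.
Proof.
move=> lq mA mB AB BD s0 d0 a0 b0 Ha Hb.
rewrite leNgt; apply/negP => ba.
have h1 := G_scale lq mB BD b0 (ltW ba).
have h2 := G_sub lq mA mB AB BD (ltW a0).
have e1 : b * (sigma ^+ 2 / 2 * (a * a) + - mu * a + - delta) <=
          a * (sigma ^+ 2 / 2 * (b * b) + - mu * b + - delta).
  apply: (le_trans (ler_wpM2l (ltW b0) Ha)).
  apply: (le_trans (ler_wpM2l (ltW b0) h2)).
  apply: (le_trans h1).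
  by rewrite ler_pM2l.
have id : a * (sigma ^+ 2 / 2 * (b * b) + - mu * b + - delta) -
          b * (sigma ^+ 2 / 2 * (a * a) + - mu * a + - delta) =
          - ((a - b) * (sigma ^+ 2 / 2 * (a * b) + delta)) by ring.
have pos : 0 < (a - b) * (sigma ^+ 2 / 2 * (a * b) + delta).
  apply: mulr_gt0; first by rewrite subr_gt0.
  apply: ltr_wpDr => //; apply: mulr_gt0; last exact: mulr_gt0.
  by apply: divr_gt0 => //; exact: exprn_gt0.
lra.
Qed.

Unset Implicit Arguments.

Theorem mainTheorem1 (R : realType) (mu sigma delta : R) (q : R -> R)
  (rho : nat -> R) :
  0 <= mu -> 0 < sigma -> levy_density q -> 0 <= delta ->
  (forall n : nat, (1 <= n)%N ->
     0 < rho n /\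
     trunc_laplace q (n%:R^-1) (rho n)
     = Qbar q (n%:R^-1) + delta - sigma ^+ 2 / 2 * rho n ^+ 2 + mu * rho n) ->
  exists r : R,
    [/\ 0 < r, delta = phiD mu sigma q r,
        (forall r' : R, 0 < r' -> delta = phiD mu sigma q r' -> r' = r) &
        rho @ \oo --> r].
Proof.
move=> mu0 s0 lq d0 H.
pose P (u : R) := sigma ^+ 2 / 2 * (u * u) + - mu * u + - delta.
pose D0 : set R := `](0:R), +oo[%classic.
have mD : measurable D0 by exact: measurable_itv.
pose Dn (n : nat) : set R := `[n%:R^-1, +oo[%classic.
have mDn n : measurable (Dn n) by exact: measurable_itv.
have DnD n : (1 <= n)%N -> Dn n `<=` D0.
  move=> n1 x; rewrite /Dn /D0 /= !in_itv /= !andbT; apply: lt_le_trans.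
  by rewrite invr_gt0 ltr0n.
have Dsub n m : (1 <= n)%N -> (n <= m)%N -> Dn n `<=` Dn m.
  move=> n1 nm x; rewrite /Dn /= !in_itv /= !andbT; apply: le_trans.
  have m1 : (1 <= m)%N := leq_trans n1 nm.
  rewrite lef_pV2 ?posrE ?ltr0n // ler_nat //.
have HG n : (1 <= n)%N -> 0 < rho n /\ Gq q (Dn n) (rho n) = P (rho n).
  move=> n1; have [r0 Hr] := H n n1; split => //.
  rewrite /Dn hyp_conv //; last exact: ltW.
    by rewrite Hr /P expr2; lra.
  by rewrite invr_gt0 ltr0n.
pose s n := rho n.+1.
have spos n : 0 < s n by have [] := HG n.+1 isT.
have sG n : Gq q (Dn n.+1) (s n) = P (s n) by have [] := HG n.+1 isT.
have sincr : nondecreasing_seq s.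
  move=> n m nm.
  apply: (@compare R q (Dn n.+1) (Dn m.+1) mu sigma delta) => //.
  - exact: Dsub.
  - exact: DnD.
  - by rewrite sG.
  - by rewrite sG.
pose g1 := Gq q D0 1.
have g10 : 0 <= g1 by apply: G_ge0.
pose K := g1 + mu + delta.
pose M := 1 + 2 * K / sigma ^+ 2.
have sbound n : s n <= M.
  rewrite leNgt; apply/negP => hM.
  have s2 : 0 < sigma ^+ 2 by exact: exprn_gt0.
  have K0 : 0 <= K by rewrite /K; lra.
  have MS : M * sigma ^+ 2 = sigma ^+ 2 + 2 * K.
    by rewrite /M mulrDl mul1r divfK // gt_eqF.
  have M1 : 1 <= M.
    rewrite /M lerDl; apply: divr_ge0; [lra|exact: ltW].
  have sn1 : 1 < s n := le_lt_trans M1 hM.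
  have e1 : P (s n) <= Gq q D0 (s n).
    rewrite -sG; apply: G_sub => //; [exact: DnD|exact: ltW].
  have e2 : 1 * Gq q D0 (s n) <= s n * g1.
    by apply: G_scale => //; exact: ltW.
  rewrite mul1r in e2.
  rewrite /P in e1.
  move: e1 e2 hM sn1 MS; set t := s n; set S := sigma ^+ 2 => e1 e2 hM sn1 MS.
  have dt : delta <= delta * t by rewrite ler_peMr //; exact: ltW.
  have f1 : S * (t * t) <= 2 * (t * K) by rewrite /K; lra.
  have f2 : S * t <= 2 * K.
    have t0 : 0 < t by lra.
    by rewrite -(ler_pM2l t0); lra.
  have f3 : M * S < t * S by rewrite ltr_pM2r.
  have f4 : t * S = S * t by rewrite mulrC.
  have S0 : 0 < S by [].
  lra.
have cs : s @ \oo --> sup (range s).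
  apply: nondecreasing_cvgn => //.
  by exists M => _ [n _ <-]; exact: sbound.
set L := sup (range s) in cs.
have sL n : s n <= L.
  have := nondecreasing_cvgn_le sincr (cvgP _ cs) n.
  by rewrite (cvg_lim _ cs).
have Lpos : 0 < L := lt_le_trans (spos 0%N) (sL 0%N).
have cP : (fun n => P (s n)) @ \oo --> P L by exact: cvg_poly.
have I1 : P L <= Gq q D0 L.
  rewrite -(cvg_lim _ cP) //.
  apply: limr_le; first exact: cvgP _ cP.
  apply: nearW => n.
  rewrite -sG; apply: (@le_trans _ _ (Gq q D0 (s n))).
    by apply: G_sub => //; [exact: DnD|exact: ltW].
  by apply: G_mono => //; exact: ltW.
have I2 : Gq q D0 L <= P L.
  apply: G_lim => //; first exact: ltW.
  move=> m.
  set Gm := Gq q _ L.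
  have cw : (fun n => s n * Gm - L * P (s n)) @ \oo --> L * Gm - L * P L.
    apply: cvgB; first by apply: cvgM => //; exact: cvg_cst.
    by apply: cvgM => //; exact: cvg_cst.
  have : L * Gm - L * P L <= 0.
    rewrite -(cvg_lim _ cw) //.
    apply: limr_le; first exact: cvgP _ cw.
    exists m => // n /= mn.
    rewrite subr_le0.
    have h1 : s n * Gm <= L * Gq q (Dn m.+1) (s n).
      apply: G_scale => //; exact: (DnD m.+1 isT).
    have h2 : Gq q (Dn m.+1) (s n) <= Gq q (Dn n.+1) (s n).
      apply: G_sub => //; [exact: Dsub|exact: DnD|exact: ltW].
    rewrite sG in h2.
    apply: (le_trans h1); rewrite ler_pM2l //.
  rewrite -mulrBr pmulr_rle0 // subr_le0 //.
have gL : Gq q D0 L = P L by apply/le_anti; rewrite I1 I2.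
exists L; split.
- exact: Lpos.
- rewrite phi_conv //; last exact: ltW.
  by rewrite gL /P expr2; ring.
- move=> r' r0 hr.
  have gr : Gq q D0 r' = P r'.
    move: hr; rewrite phi_conv //; last exact: ltW.
    rewrite /P expr2 => hr; lra.
  apply/le_anti; apply/andP; split.
  + apply: (@compare R q D0 D0 mu sigma delta) => //; by rewrite ?gr ?gL.
  + apply: (@compare R q D0 D0 mu sigma delta) => //; by rewrite ?gr ?gL.
- by rewrite -cvg_shiftS; exact: cs.
Qed.
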